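(* Let $S=\{0,1,\dots,p-1\}$ with $p\ge 2$, let $m\ge 2$, and let $f:S^m\to S$ be a local rule. If there exists a pair of replaceable local configurations for $f$, then there exists a pair of periodic local configurations for $f$.
   Context: A local configuration is a finite word over $S$. For a word $w=w_1w_2\cdots w_n$ with $n\ge m$, its successor under $f$ is the word $\hat f(w)=u_1\cdots u_{n-m+1}$ with $u_j=f(w_j,w_{j+1},\dots,w_{j+m-1})$. For $k\le n$, $\mathrm{left}_k(w)=w_1\cdots w_k$ and $\mathrm{right}_k(w)=w_{n-k+1}\cdots w_n$. Two local configurations $\alpha,\beta$ of the same length $n$ are replaceable if: $n\ge 2m-1$; $\alpha\ne\beta$; $\mathrm{left}_{m-1}(\alpha)=\mathrm{left}_{m-1}(\beta)$; $\mathrm{right}_{m-1}(\alpha)=\mathrm{right}_{m-1}(\beta)$; and $\hat f(\alpha)=\hat f(\beta)$. They are periodic if: $n\ge m$; $\alpha\ne\beta$; $\mathrm{left}_{m-1}(\alpha)=\mathrm{right}_{m-1}(\alpha)$; $\mathrm{left}_{m-1}(\beta)=\mathrm{right}_{m-1}(\beta)$; and $\hat f(\alpha)=\hat f(\beta)$. *)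

(* Defs.v *)
From mathcomp Require Import all_boot.
Set Implicit Arguments. Unset Strict Implicit. Unset Printing Implicit Defensive.

(* S = 'I_p = {0,...,p-1}; a local rule f : S^m -> S is a function on m-tuples.
   Local configurations are finite words w : seq 'I_p (w_1 ... w_n is w`_0 ... w`_(n-1)). *)

(* the window (w_{j+1}, ..., w_{j+m}) (0-based start index j), as an m-tuple;
   x0 is a default that is never used when j + m <= size w. *)
Definition window {p : nat} (m : nat) (x0 : 'I_p) (w : seq 'I_p) (j : nat)
  : m.-tuple 'I_p :=
  [tuple nth x0 w (j + i) | i < m].

(* successor \hat f(w) = u_1 ... u_{n-m+1} with u_j = f(w_j, ..., w_{j+m-1}),
   for a word w of length n >= m. *)
Definition succ_word {p m : nat} (f : m.-tuple 'I_p -> 'I_p) (w : seq 'I_p)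
  : seq 'I_p :=
  match w with
  | [::] => [::]
  | x0 :: _ => [seq f (window m x0 w j) | j <- iota 0 (size w - m + 1)]
  end.

Definition left_k {T : Type} (k : nat) (w : seq T) : seq T := take k w.
Definition right_k {T : Type} (k : nat) (w : seq T) : seq T := drop (size w - k) w.

Definition replaceable {p m : nat} (f : m.-tuple 'I_p -> 'I_p)
  (a b : seq 'I_p) : Prop :=
  size a = size b /\
      2 * m - 1 <= size a /\
      a <> b /\
      left_k (m - 1) a = left_k (m - 1) b /\
      right_k (m - 1) a = right_k (m - 1) b /\
      succ_word f a = succ_word f b.

Definition periodic_pair {p m : nat} (f : m.-tuple 'I_p -> 'I_p)
  (a b : seq 'I_p) : Prop :=
  size a = size b /\
      m <= size a /\
      a <> b /\
      left_k (m - 1) a = right_k (m - 1) a /\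
      left_k (m - 1) b = right_k (m - 1) b /\
      succ_word f a = succ_word f b.

(* Main.v *)
Require Import Defs.
From mathcomp Require Import all_boot.
From mathcomp Require Import zify.
Set Implicit Arguments. Unset Strict Implicit. Unset Printing Implicit Defensive.

Lemma succ_nth {p m : nat} (f : m.-tuple 'I_p -> 'I_p) x w d j :
  j < size (x :: w) - m + 1 ->
  nth d (succ_word f (x :: w)) j = f (window m x (x :: w) j).
Proof.
move=> Hj; rewrite /succ_word (nth_map 0); last by rewrite size_iota.
by rewrite nth_iota.
Qed.

Theorem lemma5 (p m : nat) (f : m.-tuple 'I_p -> 'I_p) :
  2 <= p -> 2 <= m ->
  (exists a b : seq 'I_p, replaceable f a b) ->
  exists a b : seq 'I_p, periodic_pair f a b.
Proof.
move=> _ Hm [a [b [Hs [Hn [Hab [Hl [Hr Hsucc]]]]]]].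
set u := left_k (m - 1) a.
have Hu : size u = m - 1 by rewrite /u /left_k size_take; case: ltnP; lia.
exists (a ++ u), (b ++ u).
have Hrr : forall k x, size a - (m - 1) <= k ->
    nth x (a ++ u) k = nth x (b ++ u) k.
  move=> k x Hk; rewrite !nth_cat -Hs.
  case: ltnP => Hka //.
  have E1 : a = take (size a - (m-1)) a ++ drop (size a - (m-1)) a by rewrite cat_take_drop.
  have E2 : b = take (size a - (m-1)) b ++ drop (size a - (m-1)) b by rewrite cat_take_drop.
  move: Hr; rewrite /right_k -Hs => Hr.
  rewrite E1 E2 !nth_cat !size_take -Hs.
  have -> : (size a - (m - 1) < size a) = true by lia.
  have -> : (k < size a - (m - 1)) = false by lia.
  by rewrite Hr.
split; first by rewrite !size_cat Hs.
split; first by rewrite size_cat; lia.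
split.
  move=> /(congr1 (take (size a))); rewrite take_size_cat // take_size_cat //.
split.
  rewrite /left_k /right_k size_cat Hu.
  rewrite takel_cat; last lia.
  by rewrite addnK drop_size_cat.
split.
  rewrite /left_k /right_k size_cat Hu.
  rewrite takel_cat; last lia.
  by rewrite addnK drop_size_cat // /u Hl.
clearbody u.
case: a Hs Hn Hab Hl Hr Hsucc Hrr => [|x a'] Hs Hn; first by move: Hn => /=; lia.
case: b Hs => [|y b'] Hs // _ Hl Hr Hsucc Hrr.
rewrite !cat_cons /succ_word.
have Hs' : size (x :: a' ++ u) = size (y :: b' ++ u) by rewrite /= !size_cat; case: Hs => ->.
rewrite -Hs'.
apply/eq_in_map => j; rewrite mem_iota add0n => /andP [_ Hj].
move: Hrr; rewrite /= => Hrr.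
rewrite /= size_cat Hu in Hj.
case: (leqP j (size (x :: a') - m)) => Hjm.
  have := congr1 (nth x^~ j) Hsucc.
  rewrite (@succ_nth _ _ f x a' x j); last by lia.
  rewrite (@succ_nth _ _ f y b' x j); last by rewrite -Hs; lia.
  have -> : window m x (x :: a' ++ u) j = window m x (x :: a') j.
    apply: eq_mktuple => i.
    rewrite -cat_cons nth_cat ifT //; have := ltn_ord i; simpl in *; lia.
  have -> : window m y (y :: b' ++ u) j = window m y (y :: b') j.
    apply: eq_mktuple => i.
    rewrite -cat_cons nth_cat ifT //; have := ltn_ord i; case: Hs; simpl in *; lia.
  by [].
congr f; apply: eq_mktuple => i.
have Hi := ltn_ord i.
rewrite -!cat_cons.
have -> : nth x ((x :: a') ++ u) (j + i) = nth y ((x :: a') ++ u) (j + i).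
  apply: set_nth_default; rewrite size_cat Hu /=; lia.
apply: Hrr; simpl in *; lia.
Qed.
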